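(* Let $\Omega$ be a domain in $\mathscr H$ and $\alpha\in\{0,1\}$. Then: (1) $d_0^2=d_1^2=0$ on $C_0^\infty(\Omega,\wedge^p\mathbb C^{2n})$; (2) $d_0d_1=-d_1d_0$; (3) for $F\in C_0^\infty(\Omega,\wedge^p\mathbb C^{2n})$ and $G\in C_0^\infty(\Omega,\wedge^q\mathbb C^{2n})$, $d_\alpha(F\wedge G)=d_\alpha F\wedge G+(-1)^pF\wedge d_\alpha G$.
   Context: $\mathscr H=\mathbb R^{4n}\times\mathbb R$ with product $(x,t)\cdot(y,s)=\big(x+y,\,t+s+2\sum_{l=1}^{2n}(x_{2l-1}y_{2l}-x_{2l}y_{2l-1})\big)$ and vector fields $X_{2l-1}=\partial_{x_{2l-1}}-2x_{2l}\partial_t$, $X_{2l}=\partial_{x_{2l}}+2x_{2l-1}\partial_t$ ($l=1,\dots,2n$). With $\mathbf i$ the complex imaginary unit, for $l=0,\dots,n-1$ define $Z_{l0'}=X_{4l+1}+\mathbf iX_{4l+2}$, $Z_{l1'}=-X_{4l+3}-\mathbf iX_{4l+4}$, $Z_{(n+l)0'}=X_{4l+3}-\mathbf iX_{4l+4}$, $Z_{(n+l)1'}=X_{4l+1}-\mathbf iX_{4l+2}$. Fix a basis $\omega^0,\dots,\omega^{2n-1}$ of $\mathbb C^{2n}$; for $F=\sum_If_I\omega^I$ ($\omega^I=\omega^{i_1}\wedge\cdots\wedge\omega^{i_p}$) define $d_\alpha F=\sum_I\sum_{A=0}^{2n-1}Z_{A\alpha'}f_I\,\omega^A\wedge\omega^I$,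 $\alpha=0,1$. *)

(* Defs.v *)
From HB Require Import structures.
From mathcomp Require Import all_boot all_order all_algebra.
From mathcomp Require Import all_classical all_reals all_analysis.
From mathcomp.real_closed Require Import complex.
Set Implicit Arguments. Unset Strict Implicit. Unset Printing Implicit Defensive.
Import Order.TTheory GRing.Theory Num.Theory.
Import numFieldNormedType.Exports.
Local Open Scope ring_scope.

(* Points of the quaternionic Heisenberg group H = R^{4n} x R, as row vectors
   of length 4n+1: entries 0..4n-1 are x_1..x_{4n}, the last entry is t. *)
Definition pt (R : realType) (n : nat) := 'rV[R]_((4 * n).+1).

Section Heis.
Variables (R : realType) (n : nat).
Local Notation P := (pt R n).
Local Notation C := (R[i]).

Definition evec (j : 'I_((4 * n).+1)) : P := delta_mx 0 j.

(* coordinate x_k, 1-based (k = 1..4n) *)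
Definition xco (k : nat) (x : P) : R := x ord0 (inord k.-1).
Definition pdir (j : 'I_((4 * n).+1)) (g : P -> R) : P -> R :=
  fun x => derive g x (evec j).
Definition pdx (k : nat) (g : P -> R) : P -> R := pdir (inord k.-1) g.
Definition pdt (g : P -> R) : P -> R := pdir ord_max g.

Definition Xr (k : nat) (g : P -> R) : P -> R := fun x =>
  if odd k then pdx k g x - 2 * xco k.+1 x * pdt g x
  else pdx k g x + 2 * xco k.-1 x * pdt g x.

Definition Xc (k : nat) (f : P -> C) : P -> C := fun x =>
  Complex (Xr k (fun y => complex.Re (f y)) x) (Xr k (fun y => complex.Im (f y)) x).

(* Z_{A alpha'}, A = 0..2n-1, alpha = false (0') or true (1') *)
Definition Zop (A : 'I_(2 * n)) (alpha : bool) (f : P -> C) : P -> C :=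
  fun x =>
  let i := Complex (0 : R) 1 in
  if (A < n)%N then
    let l := val A in
    if ~~ alpha then Xc (4 * l + 1) f x + i * Xc (4 * l + 2) f x
    else - Xc (4 * l + 3) f x - i * Xc (4 * l + 4) f x
  else
    let l := (val A - n)%N in
    if ~~ alpha then Xc (4 * l + 3) f x - i * Xc (4 * l + 4) f x
    else Xc (4 * l + 1) f x - i * Xc (4 * l + 2) f x.

(* Forms F = sum_I f_I omega^I, with omega^0..omega^{2n-1} the fixed basis of
   C^{2n}: a hform is the family of its coefficient functions indexed by the
   subsets I of {0,..,2n-1} (omega^I = omega^{i_1} /\ ... /\ omega^{i_p},
   i_1 < ... < i_p). *)
Definition hform := {set 'I_(2 * n)} -> P -> C.

Definition is_pform (p : nat) (F : hform) : Prop :=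
  forall I : {set 'I_(2 * n)}, #|I| != p -> F I = (fun _ => 0).

(* omega^I /\ omega^J = wsgn I J omega^(I u J) when I, J disjoint (else 0) *)
Definition wsgn (I J : {set 'I_(2 * n)}) : C :=
  (-1) ^+ #|[set ij : 'I_(2 * n) * 'I_(2 * n) |
              [&& ij.1 \in I, ij.2 \in J & (ij.2 < ij.1)%N]]|.

Definition wedge (F G : hform) : hform := fun K x =>
  \sum_(I : {set 'I_(2 * n)}) \sum_(J : {set 'I_(2 * n)})
     (if [disjoint I & J] && (I :|: J == K) then wsgn I J * (F I x * G J x)
      else 0).

Definition dop (alpha : bool) (F : hform) : hform := fun K x =>
  \sum_(I : {set 'I_(2 * n)}) \sum_(A : 'I_(2 * n))
     (if (A \notin I) && (A |: I == K) then wsgn [set A] I * Zop A alpha (F I) x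
      else 0).

Definition zero_form : hform := fun _ _ => 0.

Definition iter_pd (ks : seq 'I_((4 * n).+1)) (g : P -> R) : P -> R :=
  foldr pdir g ks.
Definition smooth (g : P -> R) : Prop :=
  forall ks : seq 'I_((4 * n).+1),
    continuous (iter_pd ks g) /\
    forall (j : 'I_((4 * n).+1)) (x : P), derivable (iter_pd ks g) x (evec j).

(* C_0^infty(Omega, C): smooth (real and imaginary parts) with compact support
   contained in Omega (extended by zero outside Omega) *)
Definition C0inf (Omega : set P) (f : P -> C) : Prop :=
  smooth (fun x => complex.Re (f x)) /\ smooth (fun x => complex.Im (f x)) /\
  compact (closure [set x | f x != 0]%classic) /\
  (closure [set x | f x != 0]%classic `<=` Omega)%classic.

Definition C0inf_form (Omega : set P) (p : nat) (F : hform) : Prop :=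
  is_pform p F /\ forall I : {set 'I_(2 * n)}, C0inf Omega (F I).

Definition domain (Omega : set P) : Prop :=
  open Omega /\ connected Omega /\ (Omega !=set0)%classic.

End Heis.

(* Main.v *)
Require Import Defs.
From HB Require Import structures.
From mathcomp Require Import all_boot all_order all_algebra.
From mathcomp Require Import all_classical all_reals all_analysis.
From mathcomp.real_closed Require Import complex.
Import Order.TTheory GRing.Theory Num.Theory.
Local Open Scope classical_set_scope.
Local Open Scope ring_scope.
From mathcomp.algebra_tactics Require Import ring lra.
From mathcomp.zify Require Import zify.
Import numFieldNormedType.Exports.
Set Implicit Arguments. Unset Strict Implicit. Unset Printing Implicit Defensive.

Section A.
Variables (R : realType) (n : nat).
Local Notation P := (pt R n).

Lemma dD (g h : P -> R) x v : derivable g x v -> derivable h x v ->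
  derivable (fun y => g y + h y) x v /\
  'D_v (fun y => g y + h y) x = 'D_v g x + 'D_v h x.
Proof.
move=> dg dh; have -> : (fun y => g y + h y) = g + h by [].
by split; [exact: derivableD | exact: deriveD].
Qed.

Lemma dZ (g : P -> R) a x v : derivable g x v ->
  derivable (fun y => a * g y) x v /\
  'D_v (fun y => a * g y) x = a * 'D_v g x.
Proof.
move=> dg; have -> : (fun y => a * g y) = a *: g by [].
by split; [exact: derivableZ | exact: deriveZ].
Qed.

Lemma dM (g h : P -> R) x v : derivable g x v -> derivable h x v ->
  derivable (fun y => g y * h y) x v /\
  'D_v (fun y => g y * h y) x = 'D_v g x * h x + g x * 'D_v h x.
Proof.
move=> dg dh; have -> : (fun y => g y * h y) = g * h by [].
split; first exact: derivableM.
by rewrite deriveM // /GRing.scale /= addrC mulrC.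
Qed.

Lemma dcoord (j : 'I_((4 * n).+1)) x v :
  derivable (fun y : P => y ord0 j) x v /\ 'D_v (fun y : P => y ord0 j) x = v ord0 j.
Proof.
have E : (fun h : R => h^-1 *: (((fun y : P => y ord0 j) \o shift x) (h *: v) - x ord0 j))
   @ 0^' --> v ord0 j.
  apply: (cvg_near_cst (v ord0 j)) => /=.
  near=> h; rewrite !mxE addrK /GRing.scale /= mulrA mulVf ?mul1r //.
  by near: h; exact: nbhs_dnbhs_neq.
split; first by apply/cvg_ex; exists (v ord0 j).
exact: cvg_lim E.
Unshelve. all: by end_near.
Qed.
End A.

Section A2.
Variables (R : realType) (n : nat).
Local Notation P := (pt R n).

Lemma line_derive (g : P -> R) (u y : P) (s : R) :
  derivable g (s *: u + y) u ->
  is_derive s 1 (fun r => g (r *: u + y)) ('D_u g (s *: u + y)).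
Proof.
have E : (fun h : R => h^-1 *: (((fun r => g (r *: u + y)) \o shift s) (h *: 1)
     - g (s *: u + y))) =
   (fun h : R => h^-1 *: ((g \o shift (s *: u + y)) (h *: u) - g (s *: u + y))).
  apply/funext => h /=; congr (_ *: (g _ - _)).
  rewrite /shift /=; transitivity ((h + s) *: u + y).
    by congr (_ *: _ + _); congr (_ + _); exact: mulr1.
  by rewrite scalerDl addrA.
move=> dg; split.
  by rewrite /derivable E.
by rewrite /derive E.
Qed.
End A2.
Section A3.
Variables (R : realType) (n : nat).
Local Notation P := (pt R n).

Lemma second_diff (g : P -> R) (u v x : P) (h : R) : 0 < h ->
  (forall y, derivable g y u) -> (forall y, derivable ('D_u g) y v) ->
  exists c1 c2, (0 <= c1 <= h) /\ (0 <= c2 <= h) /\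
   g (h *: u + (h *: v + x)) - g (h *: u + x) - (g (h *: v + x) - g x)
   = h * h * 'D_v ('D_u g) (c2 *: v + (c1 *: u + x)).
Proof.
move=> h0 dgu dguv.
pose phi : R -> R := (fun r => g (r *: u + (h *: v + x))) - (fun r => g (r *: u + x)).
have dphi (r : R) : is_derive r (1:R) phi
    ('D_u g (r *: u + (h *: v + x)) - 'D_u g (r *: u + x)).
  by apply: is_deriveB; apply: line_derive.
have [c1 c1in E1] := MVT_segment (ltW h0) (fun r _ => dphi r)
  (derivable_within_continuous (fun r _ => @ex_derive _ _ _ _ _ _ _ (dphi r))).
pose psi : R -> R := fun r => 'D_u g (r *: v + (c1 *: u + x)).
have dpsi (r : R) : is_derive r (1:R) psi ('D_v ('D_u g) (r *: v + (c1 *: u + x))).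
  exact: line_derive.
have [c2 c2in E2] := MVT_segment (ltW h0) (fun r _ => dpsi r)
  (derivable_within_continuous (fun r _ => @ex_derive _ _ _ _ _ _ _ (dpsi r))).
exists c1, c2; split; first by move: c1in; rewrite in_itv.
split; first by move: c2in; rewrite in_itv.
have E1' : g (h *: u + (h *: v + x)) - g (h *: u + x) - (g (0 *: u + (h *: v + x)) - g (0 *: u + x)) = ('D_u g (c1 *: u + (h *: v + x)) - 'D_u g (c1 *: u + x)) * (h - 0) := E1.
have E2' : 'D_u g (h *: v + (c1 *: u + x)) - 'D_u g (0 *: v + (c1 *: u + x)) = 'D_v ('D_u g) (c2 *: v + (c1 *: u + x)) * (h - 0) := E2.
rewrite !scale0r !add0r in E1' E2'.
rewrite E1' subr0 (addrCA (c1 *: u)) E2'; ring.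
Qed.

Lemma close_eq (a b : R) :
  (forall e, 0 < e -> exists D, `|a - D| < e /\ `|b - D| < e) -> a = b.
Proof.
move=> key; apply/eqP; rewrite -subr_eq0 -normr_eq0; apply/negPn/negP => hne.
have hp : 0 < `|a - b| by rewrite lt_def hne normr_ge0.
have [|D [h1 h2]] := key (`|a - b| / 4); first by rewrite divr_gt0.
have T := ler_distD D a b.
have T2 : `|D - b| = `|b - D| := distrC _ _.
lra.
Qed.

Lemma schwarz (g : P -> R) (u v x : P) :
  (forall y, derivable g y u) -> (forall y, derivable g y v) ->
  (forall y, derivable ('D_u g) y v) -> (forall y, derivable ('D_v g) y u) ->
  {for x, continuous ('D_v ('D_u g))} -> {for x, continuous ('D_u ('D_v g))} ->
  'D_v ('D_u g) x = 'D_u ('D_v g) x.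
Proof.
move=> dgu dgv dguv dgvu c1 c2.
apply: close_eq => e e0.
  have /nbhs_normP [d1 d10 H1] : \forall t \near x, `|'D_v ('D_u g) x - 'D_v ('D_u g) t| < e.
    by move/cvgrPdist_lt: c1; apply.
  have /nbhs_normP [d2 d20 H2] : \forall t \near x, `|'D_u ('D_v g) x - 'D_u ('D_v g) t| < e.
    by move/cvgrPdist_lt: c2; apply.
  pose d := Num.min d1 d2.
  have d0 : 0 < d by rewrite lt_min d10 d20.
  pose N := `|u| + `|v| + 1.
  have N0 : 0 < N by rewrite /N ltr_wpDl ?addr_ge0.
  pose h := d / (2 * N).
  have h0 : 0 < h by rewrite divr_gt0 ?mulr_gt0.
  have hN : h * (`|u| + `|v|) < d.
    have -> : d = h * (2 * N) by rewrite /h mulfVK // mulf_neq0 ?lt0r_neq0.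
    rewrite ltr_pM2l // /N; have := normr_ge0 u; have := normr_ge0 v; lra.
  have close : forall c1 c2 (w1 w2 : P), 0 <= c1 <= h -> 0 <= c2 <= h ->
      (`|w1| + `|w2| = `|u| + `|v|) ->
      `|x - (c2 *: w2 + (c1 *: w1 + x))| < d.
    move=> k1 k2 w1 w2 /andP[k10 k1h] /andP[k20 k2h] Ew.
    rewrite addrA opprD addrCA subrr addr0 normrN.
    apply: (le_lt_trans (ler_normD _ _)); rewrite !normrZ !ger0_norm //.
    apply: le_lt_trans hN; rewrite -Ew.
    rewrite mulrDr addrC; apply: lerD; exact: ler_wpM2r.
  have [k1 [k2 [k1in [k2in E1]]]] := @second_diff g u v x h h0 dgu dguv.
  have [l1 [l2 [l1in [l2in E2]]]] := @second_diff g v u x h h0 dgv dgvu.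
  have Hd1 : ball_ Num.norm x d1 (k2 *: v + (k1 *: u + x)).
    by apply: (lt_le_trans (close _ _ _ _ k1in k2in _)); first [exact: addrC | by [] | by rewrite ge_min lexx].
  have Hd2 : ball_ Num.norm x d2 (l2 *: u + (l1 *: v + x)).
    by apply: (lt_le_trans (close _ _ _ _ l1in l2in _)); first [exact: addrC | by [] | by rewrite ge_min lexx orbT].
  have A1 := H1 _ Hd1; have A2 := H2 _ Hd2.
  have hh : h * h != 0 by rewrite mulf_neq0 ?lt0r_neq0.
  have Epts : h *: u + (h *: v + x) = h *: v + (h *: u + x) := addrCA _ _ _.
  have E3 : h * h * 'D_v ('D_u g) (k2 *: v + (k1 *: u + x)) = h * h * 'D_u ('D_v g) (l2 *: u + (l1 *: v + x)).
    apply: (etrans (esym E1)); apply: (etrans _ E2).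
    rewrite Epts.
    move: (g (h *: v + (h *: u + x))) (g (h *: u + x)) (g (h *: v + x)) (g x) => q1 q2 q3 q4.
    ring.
  have Eq := mulfI hh E3.
  exists ('D_v ('D_u g) (k2 *: v + (k1 *: u + x))); split; first exact: A1.
  exact: (eq_ind_r (fun z => `|'D_u ('D_v g) x - z| < e) A2 Eq).
Qed.
End A3.

Ltac genp := repeat match goal with |- context [pdir ?i ?g ?x] => let a := fresh "a" in generalize (pdir i g x); intro a end.

Section B.
Variables (R : realType) (n : nat).
Local Notation P := (pt R n).
Local Notation C := (R[i]).
Local Notation I4 := ('I_((4 * n).+1)).
Local Notation tt := (@ord_max (4 * n)).

Definition D1 (g : P -> R) := forall (j : I4) (x : P), derivable g x (evec R j).

Lemma smooth_pdir j (g : P -> R) : smooth g -> smooth (pdir j g).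
Proof.
move=> sg ks; have := sg (ks ++ [:: j]).
by rewrite /iter_pd foldr_cat.
Qed.

Lemma smooth_D1 (g : P -> R) : smooth g -> D1 g.
Proof. by move=> sg j x; have [_ ] := sg [::]; apply. Qed.

Lemma smooth_cont (g : P -> R) : smooth g -> continuous g.
Proof. by move=> sg; have [] := sg [::]. Qed.

Lemma pdir_comm i j (g : P -> R) : smooth g -> pdir i (pdir j g) = pdir j (pdir i g).
Proof.
move=> sg; apply/funext => x; rewrite /pdir.
apply: (@schwarz R n g (evec R j) (evec R i) x).
- exact: smooth_D1.
- exact: smooth_D1.
- exact: (smooth_D1 (smooth_pdir j sg)).
- exact: (smooth_D1 (smooth_pdir i sg)).
- exact: (smooth_cont (smooth_pdir i (smooth_pdir j sg))).
- exact: (smooth_cont (smooth_pdir j (smooth_pdir i sg))).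
Qed.

Lemma evecE (i j : I4) : (evec R i) ord0 j = (i == j)%:R.
Proof. by rewrite /evec mxE (eq_sym j i) [X in X && _](_ : _ = true). Qed.

Definition Lop (i j : I4) (s : R) (g : P -> R) : P -> R :=
  fun x => pdir i g x + s * (x ord0 j * pdir tt g x).

Lemma XrL k (g : P -> R) x : Xr k g x =
  Lop (inord k.-1) (inord (if odd k then k else k.-2)) (if odd k then -2 else 2) g x.
Proof.
rewrite /Xr /Lop /xco /pdx /pdt; case: (odd k) => /=; genp; ring.
Qed.

Lemma D1_add (g h : P -> R) : D1 g -> D1 h -> D1 (fun y => g y + h y).
Proof. by move=> dg dh j x; have [] := dD (dg j x) (dh j x). Qed.
Lemma D1_scal (g : P -> R) a : D1 g -> D1 (fun y => a * g y).
Proof. by move=> dg j x; have [] := dZ a (dg j x). Qed.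
Lemma D1_mul (g h : P -> R) : D1 g -> D1 h -> D1 (fun y => g y * h y).
Proof. by move=> dg dh j x; have [] := dM (dg j x) (dh j x). Qed.
Lemma D1_cst (a : R) : D1 (fun _ => a).
Proof. by move=> j x; exact: derivable_cst. Qed.
Lemma D1_coord (j : I4) : D1 (fun y : P => y ord0 j).
Proof. by move=> k x; have [] := dcoord j x (evec R k). Qed.

Lemma pdir_add i (g h : P -> R) x : D1 g -> D1 h ->
  pdir i (fun y => g y + h y) x = pdir i g x + pdir i h x.
Proof. by move=> dg dh; have [] := dD (dg i x) (dh i x). Qed.
Lemma pdir_scal i (g : P -> R) a x : D1 g ->
  pdir i (fun y => a * g y) x = a * pdir i g x.
Proof. by move=> dg; have [] := dZ a (dg i x). Qed.
Lemma pdir_mul i (g h : P -> R) x : D1 g -> D1 h ->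
  pdir i (fun y => g y * h y) x = pdir i g x * h x + g x * pdir i h x.
Proof. by move=> dg dh; have [] := dM (dg i x) (dh i x). Qed.
Lemma pdir_cst i (a : R) x : pdir i (fun _ : P => a) x = 0.
Proof. exact: derive_cst. Qed.
Lemma pdir_coord i (j : I4) x : pdir i (fun y : P => y ord0 j) x = (i == j)%:R.
Proof. by rewrite /pdir; have [_ ->] := dcoord j x (evec R i); rewrite evecE. Qed.

Lemma Lop_add i j s (g h : P -> R) x : D1 g -> D1 h ->
  Lop i j s (fun y => g y + h y) x = Lop i j s g x + Lop i j s h x.
Proof. by move=> dg dh; rewrite /Lop (pdir_add i x dg dh) (pdir_add tt x dg dh); genp; ring. Qed.
Lemma Lop_scal i j s (g : P -> R) a x : D1 g ->
  Lop i j s (fun y => a * g y) x = a * Lop i j s g x.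
Proof. by move=> dg; rewrite /Lop (pdir_scal i a x dg) (pdir_scal tt a x dg); genp; ring. Qed.
Lemma Lop_mul i j s (g h : P -> R) x : D1 g -> D1 h ->
  Lop i j s (fun y => g y * h y) x = Lop i j s g x * h x + g x * Lop i j s h x.
Proof. by move=> dg dh; rewrite /Lop (pdir_mul i x dg dh) (pdir_mul tt x dg dh); genp; ring. Qed.
Lemma Lop_cst i j s (a : R) x : Lop i j s (fun _ => a) x = 0.
Proof. by rewrite /Lop !pdir_cst; genp; ring. Qed.

Lemma D1_Lop i j s (g : P -> R) : smooth g -> D1 (Lop i j s g).
Proof.
move=> sg; apply: D1_add; first exact: smooth_D1 (smooth_pdir i sg).
apply: D1_scal; apply: D1_mul; first exact: D1_coord.
exact: smooth_D1 (smooth_pdir tt sg).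
Qed.

Lemma pdir_Lop k i j s (g : P -> R) x : smooth g ->
  pdir k (Lop i j s g) x = pdir k (pdir i g) x +
     s * ((k == j)%:R * pdir tt g x + x ord0 j * pdir k (pdir tt g) x).
Proof.
move=> sg; rewrite /Lop.
have d1 := smooth_D1 (smooth_pdir i sg); have d2 := smooth_D1 (smooth_pdir tt sg).
have dc : D1 (fun y : P => y ord0 j) := D1_coord (j:=j).
have dm : D1 (fun y => y ord0 j * pdir tt g y) := D1_mul dc d2.
by rewrite (pdir_add k x d1 (D1_scal (a:=s) dm)) (pdir_scal k s x dm) (pdir_mul k x dc d2) pdir_coord.
Qed.

Lemma Lop_comm i j s i' j' s' (g : P -> R) x : smooth g -> j != tt -> j' != tt ->
  Lop i j s (Lop i' j' s' g) x - Lop i' j' s' (Lop i j s g) x =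
  (s' * (i == j')%:R - s * (i' == j)%:R) * pdir tt g x.
Proof.
move=> sg jt j't.
rewrite {1}/Lop (pdir_Lop _ _ _ _ _ sg) (pdir_Lop _ _ _ _ _ sg).
rewrite {1}/Lop (pdir_Lop _ _ _ _ _ sg) (pdir_Lop _ _ _ _ _ sg).
rewrite (eq_sym tt j') (negbTE j't) (eq_sym tt j) (negbTE jt).
rewrite (pdir_comm i i' sg) (pdir_comm i tt sg) (pdir_comm i' tt sg) [false%:R]/=.
genp; ring.
Qed.
End B.


Local Open Scope complex_scope.
Section C.
Variables (R : realType) (n : nat).
Local Notation P := (pt R n).
Local Notation C := (R[i]).
Local Notation I4 := ('I_((4 * n).+1)).
Local Notation tt := (@ord_max (4 * n)).

Ltac genL := repeat match goal with |- context [Lop ?i ?j ?s ?g ?x] => let a := fresh "a" in generalize (Lop i j s g x); intro a end.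

Lemma ReD (z w : C) : complex.Re (z + w) = complex.Re z + complex.Re w.
Proof. by case: z => a b; case: w => c d. Qed.
Lemma ImD (z w : C) : complex.Im (z + w) = complex.Im z + complex.Im w.
Proof. by case: z => a b; case: w => c d. Qed.
Lemma ReM (z w : C) : complex.Re (z * w) = complex.Re z * complex.Re w - complex.Im z * complex.Im w.
Proof. by case: z => a b; case: w => c d. Qed.
Lemma ImM (z w : C) : complex.Im (z * w) = complex.Re z * complex.Im w + complex.Im z * complex.Re w.
Proof. by case: z => a b; case: w => c d. Qed.
Lemma ceq (z w : C) : complex.Re z = complex.Re w -> complex.Im z = complex.Im w -> z = w.
Proof. by case: z => a b; case: w => c d /= -> ->. Qed.

Definition D1C (f : P -> C) := D1 (fun y => complex.Re (f y)) /\ D1 (fun y => complex.Im (f y)).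
Definition smoothC (f : P -> C) := smooth (fun y => complex.Re (f y)) /\ smooth (fun y => complex.Im (f y)).

Definition Lc (i j : I4) (s : R) (f : P -> C) : P -> C := fun x =>
  Complex (Lop i j s (fun y => complex.Re (f y)) x) (Lop i j s (fun y => complex.Im (f y)) x).
Definition Ct (f : P -> C) (x : P) : C :=
  Complex (pdir tt (fun y => complex.Re (f y)) x) (pdir tt (fun y => complex.Im (f y)) x).

Lemma D1C_add (f g : P -> C) : D1C f -> D1C g -> D1C (fun y => f y + g y).
Proof.
move=> [f1 f2] [g1 g2]; split.
  have -> : (fun y => complex.Re (f y + g y)) = (fun y => complex.Re (f y) + complex.Re (g y)).
    by apply/funext => y; rewrite ReD.
  exact: D1_add.
have -> : (fun y => complex.Im (f y + g y)) = (fun y => complex.Im (f y) + complex.Im (g y)).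
  by apply/funext => y; rewrite ImD.
exact: D1_add.
Qed.

Lemma ReMf (c : C) (f : P -> C) : (fun y => complex.Re (c * f y)) =
  (fun y => complex.Re c * complex.Re (f y) + (- complex.Im c) * complex.Im (f y)).
Proof. by apply/funext => y; rewrite ReM mulNr. Qed.
Lemma ImMf (c : C) (f : P -> C) : (fun y => complex.Im (c * f y)) =
  (fun y => complex.Re c * complex.Im (f y) + complex.Im c * complex.Re (f y)).
Proof. by apply/funext => y; rewrite ImM. Qed.

Lemma D1C_scal (c : C) (f : P -> C) : D1C f -> D1C (fun y => c * f y).
Proof.
move=> [f1 f2]; split; [rewrite ReMf | rewrite ImMf]; apply: D1_add; exact: D1_scal.
Qed.

Lemma ReMM (f g : P -> C) : (fun y => complex.Re (f y * g y)) =
  (fun y => complex.Re (f y) * complex.Re (g y) + (-1) * (complex.Im (f y) * complex.Im (g y))).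
Proof. by apply/funext => y; rewrite ReM mulN1r. Qed.
Lemma ImMM (f g : P -> C) : (fun y => complex.Im (f y * g y)) =
  (fun y => complex.Re (f y) * complex.Im (g y) + complex.Im (f y) * complex.Re (g y)).
Proof. by apply/funext => y; rewrite ImM. Qed.

Lemma D1C_mul (f g : P -> C) : D1C f -> D1C g -> D1C (fun y => f y * g y).
Proof.
move=> [f1 f2] [g1 g2]; split; [rewrite ReMM | rewrite ImMM].
  exact: (D1_add (D1_mul f1 g1) (D1_scal (D1_mul f2 g2))).
exact: (D1_add (D1_mul f1 g2) (D1_mul f2 g1)).
Qed.

Lemma D1C_cst (c : C) : D1C (fun _ => c).
Proof. by split; apply: D1_cst. Qed.

Lemma D1C_Lc i j s (f : P -> C) : smoothC f -> D1C (Lc i j s f).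
Proof. by move=> [f1 f2]; split; apply: D1_Lop. Qed.

Lemma Lc_add i j s (f g : P -> C) x : D1C f -> D1C g ->
  Lc i j s (fun y => f y + g y) x = Lc i j s f x + Lc i j s g x.
Proof.
move=> [f1 f2] [g1 g2]; rewrite /Lc.
have -> : (fun y => complex.Re (f y + g y)) = (fun y => complex.Re (f y) + complex.Re (g y)).
  by apply/funext => y; rewrite ReD.
have -> : (fun y => complex.Im (f y + g y)) = (fun y => complex.Im (f y) + complex.Im (g y)).
  by apply/funext => y; rewrite ImD.
by rewrite (Lop_add i j s x f1 g1) (Lop_add i j s x f2 g2).
Qed.

Lemma Lc_scal i j s (c : C) (f : P -> C) x : D1C f ->
  Lc i j s (fun y => c * f y) x = c * Lc i j s f x.
Proof.
move=> [f1 f2]; rewrite /Lc ReMf ImMf.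
rewrite (Lop_add i j s x (D1_scal f1) (D1_scal f2)) (Lop_add i j s x (D1_scal f2) (D1_scal f1)).
rewrite !Lop_scal //.
apply: ceq; rewrite ?ReM ?ImM /=; genL; move=> *; ring.
Qed.

Lemma Lc_mul i j s (f g : P -> C) x : D1C f -> D1C g ->
  Lc i j s (fun y => f y * g y) x = Lc i j s f x * g x + f x * Lc i j s g x.
Proof.
move=> [f1 f2] [g1 g2]; rewrite /Lc ReMM ImMM.
rewrite (Lop_add i j s x (D1_mul f1 g1) (D1_scal (D1_mul f2 g2))).
rewrite (Lop_add i j s x (D1_mul f1 g2) (D1_mul f2 g1)).
rewrite (Lop_scal i j s _ x (D1_mul f2 g2)) !Lop_mul //.
apply: ceq; rewrite ?ReD ?ImD ?ReM ?ImM /=.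
  move: (f x) (g x) => [a b] [c d] /=; genL; move=> *; ring.
move: (f x) (g x) => [a b] [c d] /=; genL; move=> *; ring.
Qed.

Lemma Lc_cst i j s (c : C) x : Lc i j s (fun _ => c) x = 0.
Proof. by rewrite /Lc !Lop_cst. Qed.

Lemma Lc_comm i j s i' j' s' (f : P -> C) x : smoothC f -> j != tt -> j' != tt ->
  Lc i j s (Lc i' j' s' f) x - Lc i' j' s' (Lc i j s f) x =
  ((s'%:C) * (i == j')%:R - (s%:C) * (i' == j)%:R) * Ct f x.
Proof.
move=> [f1 f2] jt j't; apply: ceq.
  rewrite ReD /= (Lop_comm _ _ _ _ _ f1 jt j't).
  by case: (i == j'); case: (i' == j); rewrite /= ?mulr1 ?mulr0; genp; move=> *; ring.
rewrite ImD /= (Lop_comm _ _ _ _ _ f2 jt j't).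
by case: (i == j'); case: (i' == j); rewrite /= ?mulr1 ?mulr0; genp; move=> *; ring.
Qed.
End C.

Local Open Scope complex_scope.
Ltac genLc := repeat match goal with |- context [Lc ?i ?j ?s ?g ?x] => let a := fresh "a" in generalize (Lc i j s g x); intro a end.
Section D.
Variables (R : realType) (n : nat).
Local Notation P := (pt R n).
Local Notation C := (R[i]).
Local Notation I4 := ('I_((4 * n).+1)).
Local Notation tt := (@ord_max (4 * n)).


Definition am (m : nat) : I4 := inord (2 * m).
Definition bm (m : nat) : I4 := inord (2 * m).+1.

Definition Zb (m : nat) (c1 c2 : C) (f : P -> C) : P -> C := fun x =>
  c1 * Lc (am m) (bm m) (-2) f x + c2 * Lc (bm m) (am m) 2 f x.

Definition zm (A : 'I_(2 * n)) (a : bool) : nat :=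
  if (A < n)%N then (if a then 2 * A + 1 else 2 * A)%N
  else (if a then 2 * (A - n) else 2 * (A - n) + 1)%N.
Definition zc1 (A : 'I_(2 * n)) (a : bool) : C :=
  if (A < n)%N then (if a then -1 else 1) else 1.
Definition zc2 (A : 'I_(2 * n)) (a : bool) : C :=
  if (A < n)%N then (if a then - 'i else 'i) else - 'i.

Lemma XcE1 k m (f : P -> C) x : k = (2 * m).+1 -> Xc k f x = Lc (am m) (bm m) (-2) f x.
Proof.
move=> ->; rewrite /Xc /Lc !XrL.
have o : odd (2 * m).+1 = true by rewrite /= oddM.
by rewrite o.
Qed.

Lemma XcE2 k m (f : P -> C) x : k = (2 * m).+2 -> Xc k f x = Lc (bm m) (am m) 2 f x.
Proof.
move=> ->; rewrite /Xc /Lc !XrL.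
have o : odd (2 * m).+2 = false by rewrite /= negbK oddM.
by rewrite o.
Qed.

Lemma ZopE A a (f : P -> C) : Zop A a f = Zb (zm A a) (zc1 A a) (zc2 A a) f.
Proof.
apply/funext => x; rewrite /Zop /Zb /zm /zc1 /zc2.
case: ifP => hA; case: a => /=.
- rewrite (XcE1 (m := 2 * A + 1)); last lia.
  rewrite (XcE2 (m := 2 * A + 1)); last lia.
  by rewrite mulN1r mulNr.
- rewrite (XcE1 (m := 2 * A)); last lia.
  rewrite (XcE2 (m := 2 * A)); last lia.
  by rewrite mul1r.
- rewrite (XcE1 (m := 2 * (A - n))); last lia.
  rewrite (XcE2 (m := 2 * (A - n))); last lia.
  by rewrite mul1r mulNr.
- rewrite (XcE1 (m := 2 * (A - n) + 1)); last lia.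
  rewrite (XcE2 (m := 2 * (A - n) + 1)); last lia.
  by rewrite mul1r mulNr.
Qed.

Lemma zm_lt A a : (zm A a < 2 * n)%N.
Proof. have := ltn_ord A; rewrite /zm; case: ifP => h; case: a; lia. Qed.

Lemma D1C_Zb m c1 c2 (f : P -> C) : smoothC f -> D1C (Zb m c1 c2 f).
Proof.
move=> sf; apply: D1C_add; apply: D1C_scal; exact: D1C_Lc.
Qed.

Lemma Zb_add m c1 c2 (f g : P -> C) x : D1C f -> D1C g ->
  Zb m c1 c2 (fun y => f y + g y) x = Zb m c1 c2 f x + Zb m c1 c2 g x.
Proof.
move=> df dg; rewrite /Zb !Lc_add //; genLc; move=> *; ring.
Qed.

Lemma Zb_scal m c1 c2 (c : C) (f : P -> C) x : D1C f ->
  Zb m c1 c2 (fun y => c * f y) x = c * Zb m c1 c2 f x.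
Proof.
move=> df; rewrite /Zb !Lc_scal //; genLc; move=> *; ring.
Qed.

Lemma Zb_cst m c1 c2 (c : C) x : Zb m c1 c2 (fun _ => c) x = 0.
Proof. by rewrite /Zb !Lc_cst !mulr0 addr0. Qed.

Lemma Zb_mul m c1 c2 (f g : P -> C) x : D1C f -> D1C g ->
  Zb m c1 c2 (fun y => f y * g y) x = Zb m c1 c2 f x * g x + f x * Zb m c1 c2 g x.
Proof.
move=> df dg; rewrite /Zb !Lc_mul //; move: (f x) (g x) => u v; genLc; move=> *; ring.
Qed.

Lemma D1C_sum (T : Type) (r : seq T) (F : T -> P -> C) :
  (forall i, D1C (F i)) -> D1C (fun y => \sum_(i <- r) F i y).
Proof.
move=> dF; elim: r => [|a r IH].
  have -> : (fun y => \sum_(i <- [::]) F i y) = (fun _ => 0) by apply/funext => y; rewrite big_nil.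
  exact: D1C_cst.
have -> : (fun y => \sum_(i <- a :: r) F i y) = (fun y => F a y + \sum_(i <- r) F i y).
  by apply/funext => y; rewrite big_cons.
exact: (D1C_add (dF a) IH).
Qed.

Lemma D1C_if (b : bool) (c : C) (f : P -> C) : D1C f -> D1C (fun y => if b then c * f y else 0).
Proof. by case: b => df; [exact: D1C_scal | exact: D1C_cst]. Qed.

Lemma Zb_sum m c1 c2 (T : Type) (r : seq T) (F : T -> P -> C) x :
  (forall i, D1C (F i)) ->
  Zb m c1 c2 (fun y => \sum_(i <- r) F i y) x = \sum_(i <- r) Zb m c1 c2 (F i) x.
Proof.
move=> dF; elim: r => [|a r IH].
  have -> : (fun y => \sum_(i <- [::]) F i y) = (fun _ => 0) by apply/funext => y; rewrite big_nil.
  by rewrite Zb_cst big_nil.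
have -> : (fun y => \sum_(i <- a :: r) F i y) = (fun y => F a y + \sum_(i <- r) F i y).
  by apply/funext => y; rewrite big_cons.
by rewrite Zb_add // ?IH ?big_cons //; exact: D1C_sum.
Qed.

Lemma Zb_if m c1 c2 (b : bool) (c : C) (f : P -> C) x : D1C f ->
  Zb m c1 c2 (fun y => if b then c * f y else 0) x = if b then c * Zb m c1 c2 f x else 0.
Proof. by case: b => df; [exact: Zb_scal | exact: Zb_cst]. Qed.

Lemma Zb_sum2 m c1 c2 (T1 T2 : Type) (r1 : seq T1) (r2 : seq T2)
   (b : T1 -> T2 -> bool) (c : T1 -> T2 -> C) (F : T1 -> T2 -> P -> C) x :
  (forall i j, D1C (F i j)) ->
  Zb m c1 c2 (fun y => \sum_(i <- r1) \sum_(j <- r2) (if b i j then c i j * F i j y else 0)) x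
  = \sum_(i <- r1) \sum_(j <- r2) (if b i j then c i j * Zb m c1 c2 (F i j) x else 0).
Proof.
move=> dF.
rewrite (@Zb_sum m c1 c2 T1 r1 (fun i y => \sum_(j <- r2) (if b i j then c i j * F i j y else 0)) x); last first.
  by move=> i; apply: D1C_sum => j; exact: D1C_if.
apply: eq_bigr => i _.
rewrite (@Zb_sum m c1 c2 T2 r2 (fun j y => if b i j then c i j * F i j y else 0) x); last first.
  by move=> j; exact: D1C_if.
by apply: eq_bigr => j _; exact: Zb_if.
Qed.
End D.

Local Open Scope complex_scope.
Section E.
Variables (R : realType) (n : nat).
Local Notation P := (pt R n).
Local Notation C := (R[i]).
Local Notation I4 := ('I_((4 * n).+1)).
Local Notation tt := (@ord_max (4 * n)).


Lemma am_val m : (m < 2 * n)%N -> nat_of_ord (am n m) = (2 * m)%N.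
Proof. by move=> h; rewrite /am inordK //; lia. Qed.
Lemma bm_val m : (m < 2 * n)%N -> nat_of_ord (bm n m) = (2 * m).+1.
Proof. by move=> h; rewrite /bm inordK //; lia. Qed.
Lemma am_tt m : (m < 2 * n)%N -> am n m != tt.
Proof. by move=> h; apply/eqP => /(congr1 (@nat_of_ord _)); rewrite am_val //=; lia. Qed.
Lemma bm_tt m : (m < 2 * n)%N -> bm n m != tt.
Proof. by move=> h; apply/eqP => /(congr1 (@nat_of_ord _)); rewrite bm_val //=; lia. Qed.
Lemma aa_eq m m' : (m < 2 * n)%N -> (m' < 2 * n)%N -> (am n m == am n m') = (m == m').
Proof.
move=> h h'; apply/eqP/eqP => [/(congr1 (@nat_of_ord _))|->//]; rewrite !am_val //; lia.
Qed.
Lemma bb_eq m m' : (m < 2 * n)%N -> (m' < 2 * n)%N -> (bm n m == bm n m') = (m == m').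
Proof.
move=> h h'; apply/eqP/eqP => [/(congr1 (@nat_of_ord _))|->//]; rewrite !bm_val //; lia.
Qed.
Lemma ab_eq m m' : (m < 2 * n)%N -> (m' < 2 * n)%N -> (am n m == bm n m') = false.
Proof.
move=> h h'; apply/eqP => /(congr1 (@nat_of_ord _)); rewrite am_val // bm_val //; lia.
Qed.
Lemma ba_eq m m' : (m < 2 * n)%N -> (m' < 2 * n)%N -> (bm n m == am n m') = false.
Proof.
move=> h h'; apply/eqP => /(congr1 (@nat_of_ord _)); rewrite am_val // bm_val //; lia.
Qed.

Lemma Zb_unf m c1 c2 (g : P -> C) x :
  Zb m c1 c2 g x = c1 * Lc (am n m) (bm n m) (-2) g x + c2 * Lc (bm n m) (am n m) 2 g x.
Proof. by []. Qed.

Lemma Lc_Zb i j s m c1 c2 (f : P -> C) x : smoothC f ->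
  Lc i j s (Zb m c1 c2 f) x = c1 * Lc i j s (Lc (am n m) (bm n m) (-2) f) x
                             + c2 * Lc i j s (Lc (bm n m) (am n m) 2 f) x.
Proof.
move=> sf.
have d1 : D1C (Lc (am n m) (bm n m) (-2) f) by apply: D1C_Lc.
have d2 : D1C (Lc (bm n m) (am n m) 2 f) by apply: D1C_Lc.
have d1' : D1C (fun y => c1 * Lc (am n m) (bm n m) (-2) f y) by apply: D1C_scal.
have d2' : D1C (fun y => c2 * Lc (bm n m) (am n m) 2 f y) by apply: D1C_scal.
rewrite /Zb (Lc_add i j s x d1' d2').
by rewrite !Lc_scal.
Qed.

Lemma two_C : ((2 : R)%:C : C) = 2.
Proof. exact: rmorph_nat. Qed.
Lemma mtwo_C : ((-2 : R)%:C : C) = -2.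
Proof. by rewrite rmorphN rmorph_nat. Qed.

Lemma Zb_comm m m' c1 c2 d1 d2 (f : P -> C) x :
  (m < 2 * n)%N -> (m' < 2 * n)%N -> smoothC f ->
  Zb m c1 c2 (Zb m' d1 d2 f) x - Zb m' d1 d2 (Zb m c1 c2 f) x =
  (if m == m' then 4 * (c1 * d2 - c2 * d1) else 0) * Ct f x.
Proof.
move=> hm hm' sf.
rewrite (Zb_unf m c1 c2 (Zb m' d1 d2 f)) (Zb_unf m' d1 d2 (Zb m c1 c2 f)).
rewrite !Lc_Zb //.
have E1 := @Lc_comm R n (am n m) (bm n m) (-2) (am n m') (bm n m') (-2) f x sf (bm_tt hm) (bm_tt hm').
have E2 := @Lc_comm R n (am n m) (bm n m) (-2) (bm n m') (am n m') 2 f x sf (bm_tt hm) (am_tt hm').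
have E3 := @Lc_comm R n (bm n m) (am n m) 2 (am n m') (bm n m') (-2) f x sf (am_tt hm) (bm_tt hm').
have E4 := @Lc_comm R n (bm n m) (am n m) 2 (bm n m') (am n m') 2 f x sf (am_tt hm) (am_tt hm').
rewrite (ab_eq hm hm') (ab_eq hm' hm) (aa_eq hm hm') (bb_eq hm' hm) in E1 E2.
rewrite (ba_eq hm hm') (ba_eq hm' hm) (bb_eq hm hm') (aa_eq hm' hm) in E3 E4.
rewrite (eq_sym m' m) in E1 E2 E3 E4.
rewrite two_C mtwo_C in E1 E2 E3 E4.
move: E1 E2 E3 E4; move: (Ct f x) => K; genLc.
move=> /eqP; rewrite subr_eq => /eqP ->.
move=> /eqP; rewrite subr_eq => /eqP ->.
move=> /eqP; rewrite subr_eq => /eqP ->.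
move=> /eqP; rewrite subr_eq => /eqP ->.
by case: (m == m'); rewrite /=; ring.
Qed.

Lemma Zop_comm A a B b (f : P -> C) x : smoothC f ->
  Zop A a (Zop B b f) x - Zop B b (Zop A a f) x =
  (if zm A a == zm B b then 4 * (zc1 R A a * zc2 R B b - zc2 R A a * zc1 R B b) else 0) * Ct f x.
Proof. by move=> sf; rewrite !ZopE; apply: Zb_comm => //; apply: zm_lt. Qed.

Lemma zm_inj (A B : 'I_(2 * n)) a : zm A a = zm B a -> A = B.
Proof.
move=> h; apply/val_inj; move: h; rewrite /zm /=.
have := ltn_ord A; have := ltn_ord B.
by case: (ltnP A n) => hA; case: (ltnP B n) => hB; case: a; lia.
Qed.

Lemma Zop_sym A B a (f : P -> C) x : smoothC f ->
  Zop A a (Zop B a f) x = Zop B a (Zop A a f) x.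
Proof.
move=> sf; apply/eqP; rewrite -subr_eq0; apply/eqP; rewrite Zop_comm //.
case: eqP => [/zm_inj AB|_]; last by rewrite mul0r.
by rewrite AB [zc1 R B a * _]mulrC subrr mulr0 mul0r.
Qed.

Lemma sub_sub4 (a b c d e : C) : a - b = e -> c - d = e -> a + d = c + b.
Proof. by move=> /eqP; rewrite subr_eq => /eqP -> /eqP; rewrite subr_eq => /eqP ->; ring. Qed.


Lemma if_eq (b1 b2 : bool) (v1 v2 : C) : b1 = b2 -> (b1 -> v1 = v2) ->
  (if b1 then v1 else 0) = (if b2 then v2 else 0).
Proof. by move=> <-; case: b1 => // ->. Qed.

Lemma Zop_anti A B (f : P -> C) x : smoothC f ->
  Zop A false (Zop B true f) x + Zop A true (Zop B false f) x =
  Zop B false (Zop A true f) x + Zop B true (Zop A false f) x.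
Proof.
move=> sf.
have E1 := Zop_comm A false B true x sf.
have E2 := Zop_comm B false A true x sf.
have K : (if zm A false == zm B true then 4 * (zc1 R A false * zc2 R B true - zc2 R A false * zc1 R B true) else 0)
       = (if zm B false == zm A true then 4 * (zc1 R B false * zc2 R A true - zc2 R B false * zc1 R A true) else 0).
{ rewrite /zm /zc1 /zc2; have := ltn_ord A; have := ltn_ord B.
  case: (ltnP A n) => hA; case: (ltnP B n) => hB /= hb ha.
  all: apply: if_eq; [by apply/eqP/eqP; lia | move=> /eqP h; first [exfalso; lia | by rewrite ?mulr1 ?mulrN1 ?opprK ?mul1r]]. }
rewrite K in E1.
exact: (sub_sub4 E1 E2).
Qed.

Lemma D1C_Zop A a (f : P -> C) : smoothC f -> D1C (Zop A a f).
Proof. by move=> sf; rewrite ZopE; apply: D1C_Zb. Qed.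

Lemma Zop_mul A a (f g : P -> C) x : D1C f -> D1C g ->
  Zop A a (fun y => f y * g y) x = Zop A a f x * g x + f x * Zop A a g x.
Proof. by move=> df dg; rewrite !ZopE; apply: Zb_mul. Qed.

Lemma Zop_sum2 A a (T1 T2 : Type) (r1 : seq T1) (r2 : seq T2)
   (b : T1 -> T2 -> bool) (c : T1 -> T2 -> C) (F : T1 -> T2 -> P -> C) x :
  (forall i j, D1C (F i j)) ->
  Zop A a (fun y => \sum_(i <- r1) \sum_(j <- r2) (if b i j then c i j * F i j y else 0)) x
  = \sum_(i <- r1) \sum_(j <- r2) (if b i j then c i j * Zop A a (F i j) x else 0).
Proof.
move=> dF; rewrite ZopE Zb_sum2 //; apply: eq_bigr => i _; apply: eq_bigr => j _.
by rewrite ZopE.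
Qed.
End E.

Local Close Scope complex_scope.
Local Close Scope ring_scope.
Local Close Scope classical_set_scope.
Local Open Scope ring_scope.

Section F.
Variable n : nat.
Local Notation T := ('I_(2 * n)).

Definition cntp (I J : {set T}) : nat :=
  #|[set ij : T * T | [&& ij.1 \in I, ij.2 \in J & (ij.2 < ij.1)%N]]|.

Lemma cntpE (I J : {set T}) : cntp I J = (\sum_(i : T) \sum_(j : T) [&& i \in I, j \in J & (j < i)%N])%N.
Proof.
rewrite pair_big /= /cntp -sum1_card big_mkcond /=.
by apply: eq_bigr => [[i j]] _; rewrite inE /=; case: [&& _, _ & _].
Qed.

Lemma sum_eq1 (f : T -> nat) (A : T) : (\sum_(j : T) ((j == A) * f j))%N = f A.
Proof.
rewrite (bigD1 A) //= eqxx mul1n big1 ?addn0 // => j /negbTE ->; by rewrite mul0n.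
Qed.

Lemma cntpUl (I I' J : {set T}) : [disjoint I & I'] -> cntp (I :|: I') J = (cntp I J + cntp I' J)%N.
Proof.
move=> dis; rewrite !cntpE -big_split; apply: eq_bigr => i _.
rewrite -big_split; apply: eq_bigr => j _; rewrite finset.in_setU.
case hI: (i \in I) => /=; last by case: (i \in I').
by rewrite (disjointFr dis hI) /= addn0.
Qed.

Lemma cntpUr (I J J' : {set T}) : [disjoint J & J'] -> cntp I (J :|: J') = (cntp I J + cntp I J')%N.
Proof.
move=> dis; rewrite !cntpE -big_split; apply: eq_bigr => i _.
rewrite -big_split; apply: eq_bigr => j _; rewrite finset.in_setU.
case: (i \in I) => //=; case hJ: (j \in J) => /=; last by case: (j \in J').
by rewrite (disjointFr dis hJ) /= addn0.
Qed.

Lemma cntp11 (A B : T) : cntp [set A] [set B] = (B < A)%N.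
Proof.
rewrite cntpE (eq_bigr (fun i => (i == A) * (\sum_(j : T) ((j == B) * (B < i)%N)))%N).
  by rewrite sum_eq1 sum_eq1.
move=> i _; rewrite finset.in_set1; case: (i == A) => /=; last by rewrite mul0n big1.
rewrite mul1n; apply: eq_bigr => j _; rewrite finset.in_set1.
by case: eqP => [->|] /=; rewrite ?mul1n ?mul0n.
Qed.

Lemma cntp1r (I : {set T}) (A : T) : cntp I [set A] = (\sum_(i : T) ((i \in I) && (A < i)%N))%N.
Proof.
rewrite cntpE; apply: eq_bigr => i _.
rewrite (eq_bigr (fun j => (j == A) * ((i \in I) && (A < i)%N))%N) ?sum_eq1 // => j _.
rewrite finset.in_set1; case: eqP => [->|_] /=; rewrite ?eqxx ?mul1n ?mul0n ?andbF //.
Qed.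

Lemma cntp1l (I : {set T}) (A : T) : cntp [set A] I = (\sum_(j : T) ((j \in I) && (j < A)%N))%N.
Proof.
rewrite cntpE (eq_bigr (fun i => (i == A) * (\sum_(j : T) ((j \in I) && (j < A)%N)))%N).
  by rewrite sum_eq1.
move=> i _; rewrite finset.in_set1; case: eqP => [->|_]; last by rewrite mul0n big1.
by rewrite mul1n.
Qed.

Lemma cntp_card (I : {set T}) (A : T) : A \notin I -> (cntp I [set A] + cntp [set A] I)%N = #|I|.
Proof.
move=> AI; rewrite cntp1r cntp1l -big_split -sum1_card [in RHS]big_mkcond /=.
apply: eq_bigr => i _; case hi: (i \in I) => //=.
have : i != A by apply/eqP => eiA; rewrite -eiA hi in AI.
move=> /negbTE h; case: (ltngtP A i) => //.
by move=> /ord_inj eAi; rewrite eAi eqxx in h.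
Qed.
End F.

Section F2.
Variables (R : realType) (n : nat).
Local Notation T := ('I_(2 * n)).
Local Notation C := (R[i]).

Lemma disjU1l (A : T) (I J : {set T}) : [disjoint A |: I & J] = (A \notin J) && [disjoint I & J].
Proof. rewrite -disjointU1; apply: eq_disjoint => x; by rewrite finset.in_setU1 !inE. Qed.
Lemma disjU1r (A : T) (I J : {set T}) : [disjoint I & A |: J] = (A \notin I) && [disjoint I & J].
Proof. by rewrite [LHS]disjoint_sym disjU1l disjoint_sym. Qed.
Lemma disjUl (I I' J : {set T}) : [disjoint I :|: I' & J] = [disjoint I & J] && [disjoint I' & J].
Proof. rewrite -disjointU; apply: eq_disjoint => x; by rewrite finset.in_setU !inE. Qed.
Lemma disjUr (I J J' : {set T}) : [disjoint I & J :|: J'] = [disjoint I & J] && [disjoint I & J'].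
Proof. by rewrite [LHS]disjoint_sym disjUl (disjoint_sym J) (disjoint_sym J'). Qed.

Lemma wsgnE (I J : {set T}) : wsgn R I J = (-1) ^+ cntp I J.
Proof. by []. Qed.

Lemma sgn_sq k : ((-1 : C) ^+ k) * (-1) ^+ k = 1.
Proof. by rewrite -expr2 sqrr_sign. Qed.

Lemma sgn_anti (A B : T) (J : {set T}) : A != B -> A \notin J -> B \notin J ->
  wsgn R [set B] (A |: J) * wsgn R [set A] J = - (wsgn R [set A] (B |: J) * wsgn R [set B] J).
Proof.
move=> AB AJ BJ; rewrite !wsgnE !cntpUr ?disjoints1 // !cntp11 !exprD.
case: (ltngtP A B) => [h|h|/ord_inj h]; last by rewrite h eqxx in AB.
- by rewrite /= expr0 expr1; ring.
- by rewrite /= expr0 expr1; ring.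
Qed.

Lemma sgn_L1 (A : T) (I J : {set T}) : [disjoint I & J] -> A \notin I ->
  wsgn R [set A] (I :|: J) * wsgn R I J = wsgn R (A |: I) J * wsgn R [set A] I.
Proof.
move=> dIJ AI; rewrite !wsgnE (cntpUr _ dIJ) (cntpUl _ (_ : [disjoint [set A] & I])) ?disjoints1 //.
rewrite !exprD; ring.
Qed.

Lemma sgn_L2 (A : T) (I J : {set T}) : [disjoint I & J] -> A \notin I -> A \notin J ->
  wsgn R [set A] (I :|: J) * wsgn R I J = (-1) ^+ #|I| * (wsgn R I (A |: J) * wsgn R [set A] J).
Proof.
move=> dIJ AI AJ; rewrite !wsgnE (cntpUr _ dIJ) (cntpUr _ (_ : [disjoint [set A] & J])); last by rewrite disjoints1.
rewrite -(cntp_card AI) !exprD.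
move: (sgn_sq (cntp I [set A])); move: ((-1 : C) ^+ cntp I [set A]) => s hs.
move: ((-1 : C) ^+ cntp [set A] I) ((-1 : C) ^+ cntp [set A] J) ((-1 : C) ^+ cntp I J) => a b c.
rewrite -[LHS]mul1r -hs; ring.
Qed.

Lemma cond_dd_sym (A B : T) (J K : {set T}) :
  (B \notin J) && (A \notin B |: J) && (A |: (B |: J) == K) =
  (A \notin J) && (B \notin A |: J) && (B |: (A |: J) == K).
Proof.
rewrite !finset.in_setU1 finset.setUCA (eq_sym A B).
by case: (B == A); case: (A \in J); case: (B \in J).
Qed.

Lemma cond_dd (A B : T) (J K : {set T}) :
  (B \notin J) && (A \notin B |: J) && (A |: (B |: J) == K) ->
  [/\ A != B, A \notin J & B \notin J].
Proof.
rewrite finset.in_setU1 negb_or => /andP[/andP[-> /andP[-> ->]] _]; split => //.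
Qed.

Lemma cond_L1 (A : T) (I J K : {set T}) :
  (A \notin I) && [disjoint A |: I & J] && ((A |: I) :|: J == K) =
  [disjoint I & J] && (A \notin I :|: J) && (A |: (I :|: J) == K).
Proof.
rewrite disjU1l finset.in_setU -finset.setUA.
by case: (A \in I); case: (A \in J); case: [disjoint I & J].
Qed.

Lemma cond_L2 (A : T) (I J K : {set T}) :
  (A \notin J) && [disjoint I & A |: J] && (I :|: (A |: J) == K) =
  [disjoint I & J] && (A \notin I :|: J) && (A |: (I :|: J) == K).
Proof.
rewrite disjU1r finset.in_setU finset.setUCA.
by case: (A \in I); case: (A \in J); case: [disjoint I & J].
Qed.
End F2.

Section G.
Variables (R : realType) (n : nat).
Local Notation T := ('I_(2 * n)).
Local Notation S := ({set 'I_(2 * n)}).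
Local Notation C := (R[i]).
Local Notation P := (pt R n).

Lemma sum_if_mulr (U : finType) (b : bool) (w : C) (f : U -> C) :
  (if b then w * \sum_(j : U) f j else 0) = \sum_(j : U) (if b then w * f j else 0).
Proof. by case: b; [rewrite mulr_sumr | rewrite big1]. Qed.

Lemma collapse (U1 U2 V : finType) (Pc : S -> V -> bool) (w : S -> V -> C)
  (Q : U1 -> U2 -> bool) (h : U1 -> U2 -> S) (w' : U1 -> U2 -> C) (Z : U1 -> U2 -> V -> C) :
  \sum_(I : S) \sum_(A : V) (if Pc I A then w I A *
      \sum_(J : U1) \sum_(B : U2) (if Q J B && (h J B == I) then w' J B * Z J B A else 0) else 0)
  = \sum_(J : U1) \sum_(B : U2) \sum_(A : V)
      (if Q J B && Pc (h J B) A then w (h J B) A * w' J B * Z J B A else 0).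
Proof.
have E1 : forall I A, (if Pc I A then w I A *
      \sum_(J : U1) \sum_(B : U2) (if Q J B && (h J B == I) then w' J B * Z J B A else 0) else 0)
   = \sum_(J : U1) \sum_(B : U2) (if Q J B && (h J B == I) && Pc I A then w I A * w' J B * Z J B A else 0).
  move=> I A; rewrite sum_if_mulr; apply: eq_bigr => J _; rewrite sum_if_mulr.
  apply: eq_bigr => B _; case: (Pc I A); rewrite ?andbT ?andbF //.
  by case: (_ && _); rewrite ?mulr0 ?mulrA.
rewrite (eq_bigr _ (fun I _ => eq_bigr _ (fun A _ => E1 I A))) => {E1}.
rewrite exchange_big /=.
rewrite (eq_bigr (fun A => \sum_(J : U1) \sum_(B : U2) \sum_(I : S)
   (if Q J B && (h J B == I) && Pc I A then w I A * w' J B * Z J B A else 0))); last first.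
  move=> A _; rewrite exchange_big /=; apply: eq_bigr => J _; exact: exchange_big.
rewrite exchange_big /=; apply: eq_bigr => J _.
rewrite exchange_big /=; apply: eq_bigr => B _.
apply: eq_bigr => A _.
rewrite (bigD1 (h J B)) //= eqxx andbT big1 ?addr0 //.
by move=> I /negbTE hI; rewrite eq_sym hI andbF andFb.
Qed.

Definition cnd (A B : T) (J K : S) : bool :=
  (B \notin J) && ((A \notin B |: J) && (A |: (B |: J) == K)).

Lemma cnd_sym A B J K : cnd A B J K = cnd B A J K.
Proof. by rewrite /cnd !andbA cond_dd_sym. Qed.

Lemma two_neq0 : (2 : C) != 0.
Proof.
apply/negP => /eqP h; have := congr1 (@complex.Re R) h => /=.
rewrite /= => h'; have : (2 : R) = 0 by rewrite -[RHS]h'.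
by move/eqP; rewrite pnatr_eq0.
Qed.

Lemma antisym (K : S) (Tm : S -> T -> T -> C) :
  (forall J A B, cnd A B J K -> Tm J A B = Tm J B A) ->
  \sum_(J : S) \sum_(B : T) \sum_(A : T)
     (if cnd A B J K then wsgn R [set A] (B |: J) * wsgn R [set B] J * Tm J A B else 0) = 0.
Proof.
move=> Hs; rewrite big1 // => J _.
set g := fun B A => (if cnd A B J K then wsgn R [set A] (B |: J) * wsgn R [set B] J * Tm J A B else 0).
have Hg : forall A B, g B A = - g A B.
  move=> A B; rewrite /g (cnd_sym A B).
  case hc: (cnd B A J K); last by rewrite oppr0.
  have [AB AJ BJ] : [/\ B != A, B \notin J & A \notin J].
    by apply: (@cond_dd n B A J K); move: hc; rewrite /cnd !andbA.
  rewrite (Hs J A B); last by rewrite cnd_sym.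
  by rewrite (sgn_anti R AB AJ BJ) mulNr.
have : \sum_(B : T) \sum_(A : T) g B A = - \sum_(B : T) \sum_(A : T) g B A.
  rewrite {1}exchange_big /= -sumrN; apply: eq_bigr => A _.
  rewrite -sumrN; apply: eq_bigr => B _; exact: Hg.
move: (\sum_(B : T) \sum_(A : T) g B A) => s /eqP.
rewrite -subr_eq0 opprK -mulr2n -mulr_natl mulf_eq0 (negbTE two_neq0) /=.
by move/eqP.
Qed.

Lemma dd_expand a b (F : hform R n) K x : (forall J, smoothC (F J)) ->
  dop a (dop b F) K x = \sum_(J : S) \sum_(B : T) \sum_(A : T)
     (if cnd A B J K then wsgn R [set A] (B |: J) * wsgn R [set B] J * Zop A a (Zop B b (F J)) x else 0).
Proof.
move=> sF.
have E : dop a (dop b F) K x = \sum_(I : S) \sum_(A : T) (if (A \notin I) && (A |: I == K) then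
   wsgn R [set A] I * \sum_(J : S) \sum_(B : T) (if (B \notin J) && (B |: J == I) then
   wsgn R [set B] J * Zop A a (Zop B b (F J)) x else 0) else 0).
  rewrite /dop; apply: eq_bigr => I _; apply: eq_bigr => A _; case: ifP => // _; congr (_ * _).
  exact: (Zop_sum2 _ _ _ _ _ _ _ (fun J B => D1C_Zop B b (sF J))).
apply: (etrans E); exact: collapse.
Qed.

Lemma part1 a (F : hform R n) : (forall J, smoothC (F J)) -> dop a (dop a F) = @zero_form R n.
Proof.
move=> sF; apply/funext => K; apply/funext => x.
rewrite dd_expand // antisym // => J A B _; exact: Zop_sym.
Qed.

Lemma part2 (F : hform R n) : (forall J, smoothC (F J)) ->
  dop false (dop true F) = (fun K x => - dop true (dop false F) K x).
Proof.
move=> sF; apply/funext => K; apply/funext => x.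
apply/eqP; rewrite -addr_eq0; apply/eqP.
rewrite !dd_expand // -big_split /=.
rewrite (eq_bigr (fun J => \sum_(B : T) \sum_(A : T) (if cnd A B J K then
   wsgn R [set A] (B |: J) * wsgn R [set B] J *
   (Zop A false (Zop B true (F J)) x + Zop A true (Zop B false (F J)) x) else 0))).
  by apply: antisym => J A B _; exact: Zop_anti.
move=> J _; rewrite -big_split /=; apply: eq_bigr => B _; rewrite -big_split /=.
apply: eq_bigr => A _; case: (cnd A B J K); first by rewrite mulrDr.
by rewrite addr0.
Qed.

Lemma sC_D1C (f : P -> C) : smoothC f -> D1C f.
Proof. by case=> h1 h2; split; apply: smooth_D1. Qed.

Lemma leib_L a (F G : hform R n) K x : (forall I, smoothC (F I)) -> (forall J, smoothC (G J)) ->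
  dop a (wedge F G) K x = \sum_(I : S) \sum_(J : S) \sum_(A : T)
   (if [disjoint I & J] && ((A \notin I :|: J) && (A |: (I :|: J) == K)) then
      wsgn R [set A] (I :|: J) * wsgn R I J *
      (Zop A a (F I) x * G J x + F I x * Zop A a (G J) x) else 0).
Proof.
move=> sF sG.
have E : dop a (wedge F G) K x = \sum_(I' : S) \sum_(A : T) (if (A \notin I') && (A |: I' == K) then
   wsgn R [set A] I' * \sum_(I : S) \sum_(J : S) (if [disjoint I & J] && (I :|: J == I') then
   wsgn R I J * (Zop A a (F I) x * G J x + F I x * Zop A a (G J) x) else 0) else 0).
  rewrite /dop /wedge; apply: eq_bigr => I' _; apply: eq_bigr => A _; case: ifP => // _; congr (_ * _).
  rewrite (Zop_sum2 _ _ _ _ _ _ _ (fun I J => D1C_mul (sC_D1C (sF I)) (sC_D1C (sG J)))).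
  apply: eq_bigr => I _; apply: eq_bigr => J _; case: ifP => // _.
  by rewrite Zop_mul //; apply: sC_D1C.
apply: (etrans E); exact: collapse.
Qed.

Lemma leib_R1 a (F G : hform R n) K x :
  wedge (dop a F) G K x = \sum_(I : S) \sum_(J : S) \sum_(A : T)
   (if (A \notin I) && ([disjoint A |: I & J] && ((A |: I) :|: J == K)) then
      wsgn R (A |: I) J * wsgn R [set A] I * (Zop A a (F I) x * G J x) else 0).
Proof.
have E : wedge (dop a F) G K x = \sum_(I' : S) \sum_(J : S) (if [disjoint I' & J] && (I' :|: J == K) then
   wsgn R I' J * \sum_(I : S) \sum_(A : T) (if (A \notin I) && (A |: I == I') then
   wsgn R [set A] I * (Zop A a (F I) x * G J x) else 0) else 0).
  rewrite /wedge /dop; apply: eq_bigr => I' _; apply: eq_bigr => J _; case: ifP => // _; congr (_ * _).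
  rewrite mulr_suml; apply: eq_bigr => I _; rewrite mulr_suml; apply: eq_bigr => A _.
  by case: ifP => _; [rewrite mulrA | rewrite mul0r].
apply: (etrans E); apply: (etrans (collapse _ _ _ _ _ _)).
by apply: eq_bigr => I _; rewrite exchange_big.
Qed.

Lemma leib_R2 a (F G : hform R n) K x :
  wedge F (dop a G) K x = \sum_(I : S) \sum_(J : S) \sum_(A : T)
   (if (A \notin J) && ([disjoint I & A |: J] && (I :|: (A |: J) == K)) then
      wsgn R I (A |: J) * wsgn R [set A] J * (F I x * Zop A a (G J) x) else 0).
Proof.
have E : wedge F (dop a G) K x = \sum_(J' : S) \sum_(I : S) (if [disjoint I & J'] && (I :|: J' == K) then
   wsgn R I J' * \sum_(J : S) \sum_(A : T) (if (A \notin J) && (A |: J == J') then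
   wsgn R [set A] J * (F I x * Zop A a (G J) x) else 0) else 0).
  rewrite /wedge /dop exchange_big /=; apply: eq_bigr => J' _; apply: eq_bigr => I _.
  case: ifP => // _; congr (_ * _).
  rewrite mulr_sumr; apply: eq_bigr => J _; rewrite mulr_sumr; apply: eq_bigr => A _.
  by case: ifP => _; [rewrite mulrCA | rewrite mulr0].
apply: (etrans E); apply: (etrans (collapse _ _ _ _ _ _)).
under eq_bigr => J _ do rewrite exchange_big.
by rewrite exchange_big.
Qed.

Lemma part3 a p (F G : hform R n) : (forall I, smoothC (F I)) -> (forall J, smoothC (G J)) ->
  is_pform p F ->
  dop a (wedge F G) = (fun K x => wedge (dop a F) G K x + (-1) ^+ p * wedge F (dop a G) K x).
Proof.
move=> sF sG pF; apply/funext => K; apply/funext => x.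
rewrite leib_L // leib_R1 leib_R2 !mulr_sumr -big_split /=; apply: eq_bigr => I _.
rewrite !mulr_sumr -big_split /=; apply: eq_bigr => J _.
rewrite !mulr_sumr -big_split /=; apply: eq_bigr => A _.
have e1 : (A \notin I) && ([disjoint A |: I & J] && ((A |: I) :|: J == K)) =
   [disjoint I & J] && ((A \notin I :|: J) && (A |: (I :|: J) == K)).
  by rewrite andbA cond_L1 -andbA.
have e2 : (A \notin J) && ([disjoint I & A |: J] && (I :|: (A |: J) == K)) =
   [disjoint I & J] && ((A \notin I :|: J) && (A |: (I :|: J) == K)).
  by rewrite andbA cond_L2 -andbA.
rewrite e1 e2; case hc: (_ && _); last by rewrite mulr0 addr0.
move: hc => /andP[dIJ /andP[hA _]]; move: hA; rewrite finset.in_setU negb_or => /andP[AI AJ].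
have L1 := sgn_L1 R dIJ AI; have L2 := sgn_L2 R dIJ AI AJ.
case: (eqVneq #|I| p) => hp.
  rewrite hp in L2.
  move: (Zop A a (F I) x) (Zop A a (G J) x) (F I x) (G J x) => zf zg f g.
  rewrite mulrDr L1; congr (_ + _); rewrite -L1 L2.
  by rewrite [RHS]mulrA.
rewrite (pF I hp).
move: (Zop A a (fun _ => 0) x) (Zop A a (G J) x) (G J x) => zf zg g.
by rewrite !mul0r !mulr0 !addr0 L1.
Qed.
End G.

Local Close Scope ring_scope.
Local Open Scope classical_set_scope.
Local Open Scope ring_scope.
Unset Implicit Arguments.

Theorem proposition1p1 (R : realType) (n : nat) (Omega : set (pt R n))
    (alpha : bool) :
  domain Omega ->
  (* (1) d_0^2 = d_1^2 = 0 on C_0^infty(Omega, /\^p C^{2n}) *)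
  (forall (p : nat) (F : hform R n), C0inf_form Omega p F ->
     dop false (dop false F) = @zero_form R n /\
     dop true (dop true F) = @zero_form R n) /\
  (* (2) d_0 d_1 = - d_1 d_0 *)
  (forall (p : nat) (F : hform R n), C0inf_form Omega p F ->
     dop false (dop true F) = (fun K x => - dop true (dop false F) K x)) /\
  (* (3) Leibniz rule *)
  (forall (p q : nat) (F G : hform R n),
     C0inf_form Omega p F -> C0inf_form Omega q G ->
     dop alpha (wedge F G) =
     (fun K x => wedge (dop alpha F) G K x + (-1) ^+ p * wedge F (dop alpha G) K x)).
Proof.
move=> _.
have sC : forall p (F : hform R n), C0inf_form Omega p F -> forall I, smoothC (F I).
  by move=> p F [_ h] I; case: (h I) => h1 [h2 _]; split.
split.
  move=> p F hF; split; apply: part1; exact: sC hF.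
split.
  move=> p F hF; apply: part2; exact: sC hF.
move=> p q F G hF hG; apply: part3; [exact: sC hF | exact: sC hG | exact: hF.1].
Qed.
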